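(* Let $k\in\mathbb{N}$, $k>2$, let $\mathcal{O}$ be an oval with support function $h$, let $\mathcal{P}_k$ be its $k$th Order Preserving Set and $D_{\mathcal{O}}$ its Steiner disk. Then \[ L_{\mathcal{O}}^2-4\pi A_{\mathcal{O}}-4\pi|A_{\mathcal{P}_k}|\geqslant 6\pi\, d_2^2(\mathcal{O},\mathcal{P}_k+D_{\mathcal{O}}), \] where $L_{\mathcal{O}}$ is the length of $\mathcal{O}$ and $A_{\mathcal{O}}$ the area it bounds.
   Context: An oval is a simple, closed, regular, smooth planar curve with nowhere vanishing curvature. Write $u(s)=(\cos s,\sin s)$, $u'(s)=(-\sin s,\cos s)$. The support function of $\mathcal{O}$ is $h(s)=\sup_{x\in\mathcal{O}}\langle x,u(s)\rangle=a_0+\sum_{n\geqslant1}(a_n\cos(ns)+b_n\sin(ns))$, and $\mathcal{O}(s)=h(s)u(s)+h'(s)u'(s)$. The average width is $\overline{w}=\frac1\pi\int_0^{2\pi}h=2a_0$; the Steiner point is $(a_1,b_1)=\frac1\pi\int_0^{2\pi}h(s)u(s)\,ds$. The Steiner disk $D_{\mathcal{O}}$ is the disk centered at the Steiner point of radius $\frac12|\overline{w}|$; its support function is $a_0+a_1\cos s+b_1\sin s$. The $k$th Order Preserving Set $\mathcal{P}_k$ is the curve $\mathcal{P}_k(s)=h_k(s)u(s)+h_k'(s)u'(s)$ with support function $h_k(s)=\frac1k\sum_{j=0}^{k-1}h(s+\tfrac{2\pi j}{k})-\frac12\overline{w}$ (equivalently $\mathcal{P}_k(s)=\frac{1}{k}\sum_{j=1}^{k}\big(\cos(\tfrac{2\pi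 j}{k})\mathcal{O}(s+\tfrac{2\pi j}{k})-\sin(\tfrac{2\pi j}{k})\mathcal{O}(s+\tfrac{2\pi j}{k})^{\perp}\big)-\frac12\overline{w}u(s)$ with $(x,y)^\perp=(-y,x)$). Its oriented area is $A_{\mathcal{P}_k}=\frac12\int_0^{2\pi}(h_k^2-h_k'^2)\,ds$. The Minkowski sum $\mathcal{P}_k+D_{\mathcal{O}}$ is the convex body with support function $h_k+a_0+a_1\cos s+b_1\sin s$. For two bodies with support functions $h_1,h_2$, $d_2=\left(\int_0^{2\pi}|h_1(s)-h_2(s)|^2ds\right)^{1/2}$. *)

(* Defs.v *)
From Stdlib Require Import Reals Lra.
From Coquelicot Require Import Coquelicot.
Open Scope R_scope.

(* An oval is described through its support function h : R -> R
   (s is the angle of the outer normal u(s) = (cos s, sin s)).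
   h is the support function of an oval iff h is smooth, 2*PI-periodic,
   and the radius of curvature h + h'' is everywhere positive
   (nowhere vanishing curvature). *)
Definition smooth (f : R -> R) : Prop :=
  forall (n : nat) (x : R), ex_derive (Derive_n f n) x.

Definition is_oval_support (h : R -> R) : Prop :=
  (forall s, h (s + 2 * PI) = h s) /\
  smooth h /\
  (forall s, 0 < h s + Derive_n h 2 s).

(* The curve O(s) = h(s) u(s) + h'(s) u'(s), coordinates. *)
Definition curve_x (h : R -> R) (s : R) : R :=
  h s * cos s - Derive h s * sin s.
Definition curve_y (h : R -> R) (s : R) : R :=
  h s * sin s + Derive h s * cos s.

Definition oval_length (h : R -> R) : R :=
  RInt (fun s => sqrt ((Derive (curve_x h) s) ^ 2 + (Derive (curve_y h) s) ^ 2))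
       0 (2 * PI).

(* Area bounded by the oval (Green's formula; the parametrization is
   positively oriented since h + h'' > 0). *)
Definition oval_area (h : R -> R) : R :=
  / 2 * RInt (fun s => curve_x h s * Derive (curve_y h) s
                     - curve_y h s * Derive (curve_x h) s) 0 (2 * PI).

Definition avg_width (h : R -> R) : R := / PI * RInt h 0 (2 * PI).
Definition a0 (h : R -> R) : R := avg_width h / 2.
Definition a1 (h : R -> R) : R := / PI * RInt (fun s => h s * cos s) 0 (2 * PI).
Definition b1 (h : R -> R) : R := / PI * RInt (fun s => h s * sin s) 0 (2 * PI).

Definition ops_support (k : nat) (h : R -> R) (s : R) : R :=
  / INR k * sum_f_R0 (fun j => h (s + 2 * PI * INR j / INR k)) (k - 1)
  - / 2 * avg_width h.

(* Oriented area of P_k. *)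
Definition ops_area (k : nat) (h : R -> R) : R :=
  / 2 * RInt (fun s => (ops_support k h s) ^ 2 - (Derive (ops_support k h) s) ^ 2)
             0 (2 * PI).

Definition steiner_disk_support (h : R -> R) (s : R) : R :=
  a0 h + a1 h * cos s + b1 h * sin s.

Definition ops_plus_disk_support (k : nat) (h : R -> R) (s : R) : R :=
  ops_support k h s + steiner_disk_support h s.

Definition support_dist2 (h1 h2 : R -> R) : R :=
  sqrt (RInt (fun s => (Rabs (h1 s - h2 s)) ^ 2) 0 (2 * PI)).

(* Main.v *)
Require Import Defs.
From Stdlib Require Import Reals Lra Lia.
From Coquelicot Require Import Coquelicot.
Open Scope R_scope.

Definition C0 (f : R -> R) := forall x, continuous f x.
Lemma C0_pt f x : C0 f -> continuous f x.
Proof. auto. Qed.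
Lemma C0_intro f : (forall x, continuous f x) -> C0 f.
Proof. auto. Qed.

Lemma cont_ex (f : R -> R) a b : C0 f -> ex_RInt f a b.
Proof. intros H; apply (ex_RInt_continuous (V:=R_CompleteNormedModule)); intros; apply H. Qed.

Lemma RInt_add (f g : R -> R) a b : C0 f -> C0 g ->
  RInt (fun x => f x + g x) a b = RInt f a b + RInt g a b :> R.
Proof. intros; apply (RInt_plus f g); apply cont_ex; auto. Qed.

Lemma RInt_sub (f g : R -> R) a b : C0 f -> C0 g ->
  RInt (fun x => f x - g x) a b = RInt f a b - RInt g a b :> R.
Proof. intros; apply (RInt_minus f g); apply cont_ex; auto. Qed.

Lemma RInt_scl (f : R -> R) c a b : C0 f ->
  RInt (fun x => c * f x) a b = c * RInt f a b :> R.
Proof. intros; apply (RInt_scal f a b c); apply cont_ex; auto. Qed.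

Lemma RInt_cst c a b : RInt (fun _ => c) a b = c * (b - a) :> R.
Proof. rewrite RInt_const. unfold scal; simpl; unfold mult; simpl. ring. Qed.

Ltac cont := try apply C0_intro; intros; apply (ex_derive_continuous (K:=R_AbsRing) (V:=R_NormedModule)); auto_derive; repeat split; auto.

Lemma C0_ext f g : (forall x, f x = g x) -> C0 f -> C0 g.
Proof. intros E H x. apply (continuous_ext f g); auto. Qed.

Lemma per_interval (p : R -> R) a : C0 p -> (forall x, p (x + 2*PI) = p x) ->
  RInt p a (a + 2*PI) = RInt p 0 (2*PI) :> R.
Proof.
  intros Hc Hp.
  rewrite <- (RInt_Chasles p a 0 (a + 2*PI)) by (apply cont_ex; auto).
  rewrite <- (RInt_Chasles p 0 (2*PI) (a + 2*PI)) by (apply cont_ex; auto).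
  assert (E : RInt p (2*PI) (a + 2*PI) = RInt p 0 a).
  { assert (H1 := RInt_comp_lin p 1 (2*PI) 0 a).
    replace (1 * 0 + 2*PI) with (2*PI) in H1 by ring.
    replace (1 * a + 2*PI) with (a + 2*PI) in H1 by ring.
    rewrite <- H1 by (apply cont_ex; auto).
    apply RInt_ext. intros x _. unfold scal; simpl; unfold mult; simpl.
    replace (1 * x + 2*PI) with (x + 2*PI) by ring. rewrite Hp; ring. }
  rewrite E. rewrite <- (opp_RInt_swap p 0 a) by (apply cont_ex; auto).
  unfold plus, opp; simpl. ring.
Qed.

Lemma per_shift (p : R -> R) c : C0 p -> (forall x, p (x + 2*PI) = p x) ->
  RInt (fun s => p (s + c)) 0 (2*PI) = RInt p 0 (2*PI) :> R.
Proof.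
  intros Hc Hp.
  assert (H1 := RInt_comp_lin p 1 c 0 (2*PI)).
  replace (1 * 0 + c) with c in H1 by ring.
  replace (1 * (2*PI) + c) with (c + 2*PI) in H1 by ring.
  rewrite per_interval in H1 by auto.
  rewrite <- H1 by (apply cont_ex; auto).
  apply RInt_ext. intros x _. unfold scal; simpl; unfold mult; simpl.
  replace (1 * x + c) with (x + c) by ring. ring.
Qed.

Lemma C0_mul f g : C0 f -> C0 g -> C0 (fun x => f x * g x).
Proof. intros Hf Hg x. apply (continuous_mult f g); auto. Qed.
Lemma C0_add f g : C0 f -> C0 g -> C0 (fun x => f x + g x).
Proof. intros Hf Hg x. apply (continuous_plus (V:=R_NormedModule) f g); auto. Qed.
Lemma C0_sub f g : C0 f -> C0 g -> C0 (fun x => f x - g x).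
Proof. intros Hf Hg x. apply (continuous_minus (V:=R_NormedModule) f g); auto. Qed.
Lemma C0_cst c : C0 (fun _ => c).
Proof. intros x. apply continuous_const. Qed.
Lemma C0_scal c f : C0 f -> C0 (fun x => c * f x).
Proof. intros; apply C0_mul; auto; apply C0_cst. Qed.
Lemma C0_cos n : C0 (fun x => cos (INR n * x)). Proof. cont. Qed.
Lemma C0_sin n : C0 (fun x => sin (INR n * x)). Proof. cont. Qed.
Lemma C0_cos1 : C0 cos. Proof. cont. Qed.
Lemma C0_sin1 : C0 sin. Proof. cont. Qed.
Lemma C0_pow2 f : C0 f -> C0 (fun x => f x ^ 2).
Proof. intros H. apply (C0_ext (fun x => f x * f x)). intros; ring. apply C0_mul; auto. Qed.
Lemma C0_opp f : C0 f -> C0 (fun x => - f x).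
Proof. intros H. apply (C0_ext (fun x => 0 - f x)). intros; ring. apply C0_sub; auto; apply C0_cst. Qed.


Lemma C0_comp a f : C0 a -> C0 f -> C0 (fun x => f (a x)).
Proof. intros Ha Hf x. apply (continuous_comp a f); auto. Qed.
Lemma C0_id : C0 (fun x => x).
Proof. intros x. apply continuous_id. Qed.

Global Opaque C0.
Ltac c0_extra := fail.
Ltac c0 := first [apply C0_cst | lazymatch goal with
| |- C0 (fun x => x) => apply C0_id
| |- C0 (fun x => @?a x + @?b x) => apply (C0_add a b); c0
| |- C0 (fun x => @?a x - @?b x) => apply (C0_sub a b); c0
| |- C0 (fun x => - @?a x) => apply (C0_opp a); c0
| |- C0 (fun x => @?a x ^ 2) => apply (C0_pow2 a); c0
| |- C0 (fun x => @?a x * @?b x) => apply (C0_mul a b); c0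
| |- C0 (fun x => cos (@?a x)) => apply (C0_comp a cos); [c0 | apply C0_cos1]
| |- C0 (fun x => sin (@?a x)) => apply (C0_comp a sin); [c0 | apply C0_sin1]
| |- C0 (fun x => ?f x) => first [exact (_ : C0 f) | assumption | c0_extra]
| |- C0 (fun x => ?f (@?a x)) => apply (C0_comp a f); [c0 | first [assumption | c0_extra]]
| |- C0 ?f => first [assumption | c0_extra]
end].
Ltac c0s := solve [c0].
Ltac c0' := c0.
Ltac lin := repeat (first [rewrite RInt_add by c0s | rewrite RInt_sub by c0s | rewrite RInt_scl by c0s ]).
Ltac lin_in H := repeat (first [rewrite RInt_add in H by c0s | rewrite RInt_sub in H by c0s | rewrite RInt_scl in H by c0s ]).
Ltac rr := match goal with |- ?a = ?b => change (@eq R a b) end.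
Lemma RInt_neg (f : R -> R) a b : C0 f -> RInt (fun x => - f x) a b = - RInt f a b :> R.
Proof. intros H. apply (RInt_opp f a b). apply cont_ex; auto. Qed.
Lemma RInt_swap' (f : R -> R) a b : C0 f -> RInt f b a = - RInt f a b :> R.
Proof. intros H. rewrite <- (opp_RInt_swap f a b). reflexivity. apply cont_ex; auto. Qed.

Lemma ftc (F f : R -> R) a b : (forall x, is_derive F x (f x)) -> C0 f -> @eq R (RInt f a b) (F b - F a).
Proof.
  intros HF Hf. apply is_RInt_unique.
  apply (is_RInt_derive (V:=R_CompleteNormedModule) F f a b); intros; auto. apply C0_pt; auto.
Qed.

Lemma sin_n2PI n : sin (INR n * (2*PI)) = 0.
Proof. replace (INR n * (2*PI)) with (0 + 2 * INR n * PI) by ring. rewrite sin_period. apply sin_0. Qed.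
Lemma cos_n2PI n : cos (INR n * (2*PI)) = 1.
Proof. replace (INR n * (2*PI)) with (0 + 2 * INR n * PI) by ring. rewrite cos_period. apply cos_0. Qed.

Lemma n2m2 n m : n <> m -> INR n * INR n - INR m * INR m <> 0.
Proof.
  intros H. assert (INR n <> INR m) by (apply not_INR; auto).
  assert (0 <= INR n) by apply pos_INR. assert (0 <= INR m) by apply pos_INR.
  intro E. assert ((INR n - INR m) * (INR n + INR m) = 0) by (rewrite <- E; ring).
  apply Rmult_integral in H3. destruct H3; [apply H0; lra|].
  assert (INR n = 0) by lra. assert (INR m = 0) by lra. apply H0; lra.
Qed.

Lemma C0_cc n m : C0 (fun x => cos (INR n * x) * cos (INR m * x)). Proof. cont. Qed.
Lemma C0_ss n m : C0 (fun x => sin (INR n * x) * sin (INR m * x)). Proof. cont. Qed.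
Lemma C0_sc n m : C0 (fun x => sin (INR n * x) * cos (INR m * x)). Proof. cont. Qed.

Lemma int_cc_neq n m : n <> m -> RInt (fun x => cos (INR n * x) * cos (INR m * x)) 0 (2*PI) = 0 :> R.
Proof.
  intros H. pose proof (n2m2 n m H) as D.
  rewrite (ftc (fun x => (INR n * sin (INR n * x) * cos (INR m * x) - INR m * cos (INR n * x) * sin (INR m * x)) / (INR n * INR n - INR m * INR m))).
  - rewrite !sin_n2PI, !Rmult_0_r, !sin_0. field; auto.
  - intros x. auto_derive; auto. field; auto.
  - apply C0_cc.
Qed.

Lemma int_ss_neq n m : n <> m -> RInt (fun x => sin (INR n * x) * sin (INR m * x)) 0 (2*PI) = 0 :> R.
Proof.
  intros H. pose proof (n2m2 n m H) as D.
  rewrite (ftc (fun x => (INR m * sin (INR n * x) * cos (INR m * x) - INR n * cos (INR n * x) * sin (INR m * x)) / (INR n * INR n - INR m * INR m))).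
  - rewrite !sin_n2PI, !Rmult_0_r, !sin_0. field; auto.
  - intros x. auto_derive; auto. field; auto.
  - apply C0_ss.
Qed.

Lemma int_sc n m : RInt (fun x => sin (INR n * x) * cos (INR m * x)) 0 (2*PI) = 0 :> R.
Proof.
  destruct (Nat.eq_dec n m) as [<-|H].
  - destruct (Nat.eq_dec n 0) as [->|Hn].
    + rewrite (RInt_ext _ (fun _ => 0)). rewrite RInt_cst; ring.
      intros. simpl. rewrite Rmult_0_l, sin_0; ring.
    + assert (INR n <> 0) by (apply not_0_INR; auto).
      rewrite (ftc (fun x => sin (INR n * x) ^ 2 / (2 * INR n))).
      * rewrite sin_n2PI, Rmult_0_r, sin_0. field; auto.
      * intros x. auto_derive; auto. field; auto.
      * apply C0_sc.
  - pose proof (n2m2 n m H) as D.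
    rewrite (ftc (fun x => - (INR n * cos (INR n * x) * cos (INR m * x) + INR m * sin (INR n * x) * sin (INR m * x)) / (INR n * INR n - INR m * INR m))).
    + rewrite !sin_n2PI, !cos_n2PI, !Rmult_0_r, !sin_0, cos_0. field; auto.
    + intros x. auto_derive; auto. field; auto.
    + apply C0_sc.
Qed.

Lemma int_cc_eq n : (n <> 0)%nat -> RInt (fun x => cos (INR n * x) * cos (INR n * x)) 0 (2*PI) = PI :> R.
Proof.
  intros Hn. assert (INR n <> 0) by (apply not_0_INR; auto).
  rewrite (ftc (fun x => x / 2 + sin (INR n * x) * cos (INR n * x) / (2 * INR n))).
  - rewrite sin_n2PI, Rmult_0_r, sin_0. field; auto.
  - intros x. auto_derive; auto. pose proof (sin2_cos2 (INR n * x)). unfold Rsqr in *. field_simplify; auto. 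
    apply Rmult_eq_reg_r with (2 * INR n). field_simplify; auto. nra. intro; apply H. lra.
  - apply C0_cc.
Qed.

Lemma int_ss_eq n : (n <> 0)%nat -> RInt (fun x => sin (INR n * x) * sin (INR n * x)) 0 (2*PI) = PI :> R.
Proof.
  intros Hn. assert (INR n <> 0) by (apply not_0_INR; auto).
  rewrite (ftc (fun x => x / 2 - sin (INR n * x) * cos (INR n * x) / (2 * INR n))).
  - rewrite sin_n2PI, Rmult_0_r, sin_0. field; auto.
  - intros x. auto_derive; auto. pose proof (sin2_cos2 (INR n * x)). unfold Rsqr in *. field_simplify; auto. 
    apply Rmult_eq_reg_r with (2 * INR n). field_simplify; auto. nra. intro; apply H. lra.
  - apply C0_ss.
Qed.

Lemma int_cos_n n : (n <> 0)%nat -> RInt (fun x => cos (INR n * x)) 0 (2*PI) = 0 :> R.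
Proof.
  intros Hn. assert (INR n <> 0) by (apply not_0_INR; auto).
  rewrite (ftc (fun x => sin (INR n * x) / INR n)).
  - rewrite sin_n2PI, Rmult_0_r, sin_0. field; auto.
  - intros x. auto_derive; auto. field; auto.
  - apply C0_cos.
Qed.

Lemma int_sin_n n : RInt (fun x => sin (INR n * x)) 0 (2*PI) = 0 :> R.
Proof.
  destruct (Nat.eq_dec n 0) as [->|Hn].
  - rewrite (RInt_ext _ (fun _ => 0)). rewrite RInt_cst; ring.
    intros. simpl. rewrite Rmult_0_l, sin_0; ring.
  - assert (INR n <> 0) by (apply not_0_INR; auto).
    rewrite (ftc (fun x => - cos (INR n * x) / INR n)).
    + rewrite cos_n2PI, Rmult_0_r, cos_0. field; auto.
    + intros x. auto_derive; auto. field; auto.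
    + apply C0_sin.
Qed.

Definition cA (u : R -> R) n : R := RInt (fun x => u x * cos (INR n * x)) 0 (2*PI).
Definition cB (u : R -> R) n : R := RInt (fun x => u x * sin (INR n * x)) 0 (2*PI).
Fixpoint Sf (u : R -> R) m x := match m with O => 0 | S m' => Sf u m' x +
  / PI * (cA u (S m') * cos (INR (S m') * x) + cB u (S m') * sin (INR (S m') * x)) end.
Fixpoint bsum (u : R -> R) m := match m with O => 0 | S m' => bsum u m' + (cA u (S m') ^ 2 + cB u (S m') ^ 2) end.

Lemma C0_Sf u m : C0 (Sf u m).
Proof. induction m; cbn [Sf]. apply C0_cst. c0'. Qed.

Ltac c0_extra ::= apply C0_Sf.

Lemma RInt_0 a b : RInt (fun _ => 0) a b = 0 :> R.
Proof. rewrite RInt_cst. ring. Qed.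

Lemma Sf_cos u m n : (m < n)%nat -> RInt (fun x => Sf u m x * cos (INR n * x)) 0 (2*PI) = 0 :> R.
Proof.
  induction m; intros H.
  - rewrite (RInt_ext _ (fun _ => 0)); [apply RInt_0|]. intros; simpl; ring.
  - rewrite (RInt_ext _ (fun x => Sf u m x * cos (INR n * x) + / PI * (cA u (S m) * (cos (INR (S m) * x) * cos (INR n * x)) + cB u (S m) * (sin (INR (S m) * x) * cos (INR n * x))))).
    2: intros; simpl; ring.
    lin. rewrite IHm by lia. rewrite int_cc_neq by lia. rewrite int_sc. ring.
Qed.

Lemma Sf_sin u m n : (m < n)%nat -> RInt (fun x => Sf u m x * sin (INR n * x)) 0 (2*PI) = 0 :> R.
Proof.
  induction m; intros H.
  - rewrite (RInt_ext _ (fun _ => 0)); [apply RInt_0|]. intros; simpl; ring.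
  - rewrite (RInt_ext _ (fun x => Sf u m x * sin (INR n * x) + / PI * (cA u (S m) * (sin (INR n * x) * cos (INR (S m) * x)) + cB u (S m) * (sin (INR (S m) * x) * sin (INR n * x))))).
    2: intros; simpl; ring.
    lin. rewrite IHm by lia. rewrite int_ss_neq by lia. rewrite int_sc. ring.
Qed.

Lemma PI_neq0 : PI <> 0.
Proof. pose proof PI_RGT_0; lra. Qed.

Lemma Sf_sq u m : RInt (fun x => Sf u m x ^ 2) 0 (2*PI) = bsum u m / PI :> R.
Proof.
  induction m.
  - rewrite (RInt_ext _ (fun _ => 0)); [rewrite RInt_0; simpl; field; apply PI_neq0|]. intros; simpl; ring.
  - pose proof PI_neq0.
    rewrite (RInt_ext _ (fun x => Sf u m x ^ 2 + 2 * / PI * (cA u (S m) * (Sf u m x * cos (INR (S m) * x)) + cB u (S m) * (Sf u m x * sin (INR (S m) * x)))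
       + / PI * / PI * (cA u (S m) ^ 2 * (cos (INR (S m) * x) * cos (INR (S m) * x)) + cB u (S m) ^ 2 * (sin (INR (S m) * x) * sin (INR (S m) * x)) + 2 * cA u (S m) * cB u (S m) * (sin (INR (S m) * x) * cos (INR (S m) * x))))).
    2: intros; simpl; ring.
    lin. rewrite IHm, Sf_cos, Sf_sin, int_cc_eq, int_ss_eq, int_sc by lia. simpl. field; auto.
Qed.

Lemma u_Sf u m : C0 u -> RInt (fun x => u x * Sf u m x) 0 (2*PI) = bsum u m / PI :> R.
Proof.
  intros Hu. induction m.
  - rewrite (RInt_ext _ (fun _ => 0)); [rewrite RInt_0; simpl; field; apply PI_neq0|]. intros; simpl; ring.
  - pose proof PI_neq0.
    rewrite (RInt_ext _ (fun x => u x * Sf u m x + / PI * (cA u (S m) * (u x * cos (INR (S m) * x)) + cB u (S m) * (u x * sin (INR (S m) * x))))).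
    2: intros; simpl; ring.
    lin. rewrite IHm. cbn [bsum]. unfold cA, cB. field; auto.
Qed.

Lemma bessel u m : C0 u -> bsum u m <= PI * RInt (fun x => u x ^ 2) 0 (2*PI).
Proof.
  intros Hu. pose proof PI_RGT_0.
  assert (H0 : 0 <= RInt (fun x => (u x - Sf u m x) ^ 2) 0 (2*PI)).
  { apply RInt_ge_0. lra. apply cont_ex; c0s. intros; apply pow2_ge_0. }
  rewrite (RInt_ext _ (fun x => u x ^ 2 - 2 * (u x * Sf u m x) + Sf u m x ^ 2)) in H0.
  2: intros; simpl; ring.
  lin_in H0. rewrite u_Sf, Sf_sq in H0 by auto.
  assert (0 <= PI * RInt (fun x => u x ^ 2) 0 (2 * PI) - bsum u m).
  { replace (PI * RInt (fun x => u x ^ 2) 0 (2 * PI) - bsum u m) with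
      (PI * (RInt (fun x => u x ^ 2) 0 (2 * PI) - 2 * (bsum u m / PI) + bsum u m / PI)) by (field; lra).
    apply Rmult_le_pos; lra. }
  lra.
Qed.

Fixpoint Dk m t := match m with O => 1 | S m' => Dk m' t + 2 * cos (INR (S m') * t) end.
Fixpoint Gk N t := match N with O => 1 | S N' => Gk N' t + Dk (S N') t end.

Lemma C0_Dk m : C0 (Dk m).
Proof. induction m; cbn [Dk]. apply C0_cst. c0'. Qed.
Lemma C0_Gk N : C0 (Gk N).
Proof. induction N; cbn [Gk]. apply C0_cst. apply C0_add; auto. apply C0_Dk. Qed.

Lemma cos_per n t : cos (INR n * (t + 2*PI)) = cos (INR n * t).
Proof. replace (INR n * (t + 2*PI)) with (INR n * t + 2 * INR n * PI) by ring. apply cos_period. Qed.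
Lemma sin_per n t : sin (INR n * (t + 2*PI)) = sin (INR n * t).
Proof. replace (INR n * (t + 2*PI)) with (INR n * t + 2 * INR n * PI) by ring. apply sin_period. Qed.

Lemma Dk_per m t : Dk m (t + 2*PI) = Dk m t.
Proof. induction m; cbn [Dk]; auto. rewrite IHm, cos_per; auto. Qed.
Lemma Gk_per N t : Gk N (t + 2*PI) = Gk N t.
Proof. induction N; cbn [Gk]; auto. rewrite IHN, Dk_per; auto. Qed.

Lemma Dk_mul m t : Dk m t * (1 - cos t) = cos (INR m * t) - cos (INR (S m) * t).
Proof.
  induction m; cbn [Dk].
  - simpl INR. replace (0 * t) with 0 by ring. replace (1 * t) with t by ring. rewrite cos_0; ring.
  - rewrite Rmult_plus_distr_r, IHm.
    rewrite !S_INR.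
    replace ((INR m + 1 + 1) * t) with ((INR m + 1) * t + t) by ring.
    replace (INR m * t) with ((INR m + 1) * t - t) by ring.
    rewrite cos_plus, cos_minus. ring.
Qed.

Lemma Gk_mul N t : Gk N t * (1 - cos t) = 1 - cos (INR (S N) * t).
Proof.
  induction N; cbn [Gk].
  - simpl INR. replace (1 * t) with t by ring. ring.
  - rewrite Rmult_plus_distr_r, IHN, Dk_mul. ring.
Qed.

Lemma Gk_nonneg N t : 0 < 1 - cos t -> 0 <= Gk N t.
Proof.
  intros H. pose proof (Gk_mul N t). pose proof (COS_bound (INR (S N) * t)).
  destruct (Rle_or_lt 0 (Gk N t)); auto. nra.
Qed.

Lemma int_sym (p : R -> R) : C0 p -> (forall x, p (x + 2*PI) = p x) ->
  RInt p (-PI) PI = RInt p 0 (2*PI) :> R.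
Proof. intros. rewrite <- (per_interval p (-PI)); auto. f_equal; ring. Qed.

Lemma int_Dk m : RInt (Dk m) 0 (2*PI) = 2 * PI :> R.
Proof.
  induction m; cbn [Dk].
  - rewrite RInt_cst. ring.
  - rewrite (RInt_add (Dk m) (fun x => 2 * cos (INR (S m) * x))) by (apply C0_Dk || c0s).
    rewrite IHm. rewrite RInt_scl by c0s. rewrite int_cos_n by lia. ring.
Qed.

Lemma int_Gk N : RInt (Gk N) 0 (2*PI) = 2 * PI * INR (S N) :> R.
Proof.
  induction N; cbn [Gk].
  - rewrite RInt_cst. simpl. ring.
  - rewrite (RInt_add (Gk N) (Dk (S N))) by (apply C0_Gk || apply C0_Dk).
    rewrite IHN, int_Dk. rewrite (S_INR (S N)). ring.
Qed.

Lemma int_Gk_1c N : RInt (fun t => (1 - cos t) * Gk N t) 0 (2*PI) = 2 * PI :> R.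
Proof.
  rewrite (RInt_ext _ (fun t => 1 - cos (INR (S N) * t))).
  - rewrite RInt_sub by c0s. rewrite int_cos_n by lia. rewrite RInt_cst. ring.
  - intros. rr. rewrite <- Gk_mul. ring.
Qed.

Ltac c0_extra ::= first [apply C0_Sf | apply C0_Dk | apply C0_Gk].

Lemma cpt_of_der f x : ex_derive f x -> continuity_pt f x.
Proof. intros H. apply continuity_pt_filterlim. apply (ex_derive_continuous (K:=R_AbsRing) (V:=R_NormedModule)). auto. Qed.

Lemma C0_of_der f : (forall x, ex_derive f x) -> C0 f.
Proof. intros H. apply C0_intro. intros x. apply (ex_derive_continuous (K:=R_AbsRing) (V:=R_NormedModule)). auto. Qed.

Lemma sl u : sin_lb u = u - u^3/6 + u^5/120 - u^7/5040.
Proof. unfold sin_lb, sin_approx, sin_term. simpl. field. Qed.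

Lemma sin_lin u : 0 <= u <= PI/2 -> u / 3 <= sin u.
Proof.
  intros. pose proof PI_4. pose proof PI_RGT_0.
  destruct (SIN u) as [Hs _]; try lra. rewrite sl in Hs.
  assert (u^5/120 - u^7/5040 >= 0).
  { assert (Ee : u^5/120 - u^7/5040 = u^5 * (42 - u^2)/5040) by field. rewrite Ee. apply Rle_ge.
    apply Rmult_le_pos; [|lra]. apply Rmult_le_pos; [apply pow_le; lra| nra]. }
  nra.
Qed.

Lemma t2_bound t : -PI <= t <= PI -> t ^ 2 <= 18 * (1 - cos t).
Proof.
  intros H. replace (cos t) with (cos (2 * (t/2))) by (f_equal; field).
  rewrite cos_2a_sin.
  destruct (Rle_or_lt 0 t).
  - pose proof (sin_lin (t/2) ltac:(lra)). nra.
  - pose proof (sin_lin (-(t/2)) ltac:(lra)). rewrite sin_neg in H1. nra.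
Qed.

Lemma Der_eq (f f1 : R -> R) x : (forall x, is_derive f x (f1 x)) -> Derive (fun y => f y) x = f1 x.
Proof. intros H. apply is_derive_unique. apply H. Qed.

Lemma coef_der f f1 n : (forall x, is_derive f x (f1 x)) -> C0 f1 -> (forall x, f (x + 2*PI) = f x) ->
  cA f1 n = INR n * cB f n /\ cB f1 n = - INR n * cA f n.
Proof.
  intros Hd Hc Hp.
  assert (Cf : C0 f) by (apply C0_of_der; intros x; exists (f1 x); auto).
  assert (P0 : f (2*PI) = f 0) by (rewrite <- (Hp 0); f_equal; ring).
  split.
  - assert (E : RInt (fun x => f1 x * cos (INR n * x) - INR n * (f x * sin (INR n * x))) 0 (2*PI)
       = f (2*PI) * cos (INR n * (2*PI)) - f 0 * cos (INR n * 0) :> R).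
    { apply (ftc (fun x => f x * cos (INR n * x))); [|c0s].
      intros x. auto_derive. exists (f1 x); auto. rewrite (Der_eq f f1 x Hd). ring. }
    rewrite RInt_sub in E by c0s. rewrite RInt_scl in E by c0s.
    rewrite cos_n2PI, Rmult_0_r, cos_0, P0 in E.
    unfold cA, cB. lra.
  - assert (E : RInt (fun x => f1 x * sin (INR n * x) + INR n * (f x * cos (INR n * x))) 0 (2*PI)
       = f (2*PI) * sin (INR n * (2*PI)) - f 0 * sin (INR n * 0) :> R).
    { apply (ftc (fun x => f x * sin (INR n * x))); [|c0s].
      intros x. auto_derive. exists (f1 x); auto. rewrite (Der_eq f f1 x Hd). ring. }
    rewrite RInt_add in E by c0s. rewrite RInt_scl in E by c0s.
    rewrite sin_n2PI, !Rmult_0_r, sin_0 in E.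
    unfold cA, cB. lra.
Qed.

Fixpoint Jm (f : R -> R) m x := match m with O => cA f 0 | S m' => Jm f m' x +
  2 * (cA f (S m') * cos (INR (S m') * x) + cB f (S m') * sin (INR (S m') * x)) end.
Fixpoint JG (f : R -> R) N x := match N with O => Jm f 0 x | S N' => JG f N' x + Jm f (S N') x end.

Lemma C0_Jm f m : C0 (Jm f m).
Proof. induction m; cbn [Jm]. apply C0_cst. c0. Qed.
Lemma C0_JG f N : C0 (JG f N).
Proof. induction N; cbn [JG]. apply C0_Jm. apply C0_add; auto. apply C0_Jm. Qed.

Ltac c0_extra ::= first [apply C0_Sf | apply C0_Dk | apply C0_Gk | apply C0_Jm | apply C0_JG].

Lemma cA0 f : cA f 0 = RInt f 0 (2*PI).
Proof. unfold cA. apply RInt_ext. intros. simpl INR. rewrite Rmult_0_l, cos_0. rr. ring. Qed.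

Lemma Jm_eq f m x : C0 f -> RInt (fun y => f y * Dk m (x - y)) 0 (2*PI) = Jm f m x :> R.
Proof.
  intros Hf. induction m.
  - cbn [Dk Jm]. rewrite cA0. apply RInt_ext. intros. rr. ring.
  - rewrite (RInt_ext _ (fun y => f y * Dk m (x - y) + 2 * (cos (INR (S m) * x) * (f y * cos (INR (S m) * y)) + sin (INR (S m) * x) * (f y * sin (INR (S m) * y))))).
    + lin. rewrite IHm. cbn [Jm]. unfold cA, cB. ring.
    + intros. rr. cbn [Dk]. replace (INR (S m) * (x - x0)) with (INR (S m) * x - INR (S m) * x0) by ring.
      rewrite cos_minus. ring.
Qed.

Lemma JG_eq f N x : C0 f -> RInt (fun y => f y * Gk N (x - y)) 0 (2*PI) = JG f N x :> R.
Proof.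
  intros Hf. induction N.
  - cbn [Gk JG]. rewrite <- (Jm_eq f 0 x Hf). apply RInt_ext. intros. rr. cbn [Dk]. ring.
  - rewrite (RInt_ext _ (fun y => f y * Gk N (x - y) + f y * Dk (S N) (x - y))).
    + lin. rewrite IHN, Jm_eq by auto. cbn [JG]. ring.
    + intros. rr. cbn [Gk]. ring.
Qed.

Lemma fJm f m : C0 f -> RInt (fun x => f x * Jm f m x) 0 (2*PI) = cA f 0 ^ 2 + 2 * bsum f m :> R.
Proof.
  intros Hf. induction m.
  - cbn [Jm bsum]. rewrite (RInt_ext _ (fun x => cA f 0 * f x)) by (intros; rr; ring).
    rewrite RInt_scl by c0s. rewrite <- cA0. ring.
  - rewrite (RInt_ext _ (fun x => f x * Jm f m x + 2 * (cA f (S m) * (f x * cos (INR (S m) * x)) + cB f (S m) * (f x * sin (INR (S m) * x))))).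
    + lin. rewrite IHm. cbn [bsum]. unfold cA, cB. ring.
    + intros. rr. cbn [Jm]. ring.
Qed.

Lemma fJG_le f N B : C0 f -> (forall m, RInt (fun x => f x * Jm f m x) 0 (2*PI) <= B) ->
  RInt (fun x => f x * JG f N x) 0 (2*PI) <= INR (S N) * B.
Proof.
  intros Hf HB. induction N.
  - cbn [JG]. simpl INR. specialize (HB O). lra.
  - rewrite (RInt_ext _ (fun x => f x * JG f N x + f x * Jm f (S N) x)).
    + rewrite RInt_add by c0s. rewrite (S_INR (S N)). specialize (HB (S N)). lra.
    + intros. rr. cbn [JG]. ring.
Qed.

Ltac c0_extra ::= first [apply C0_Sf | apply C0_Dk | apply C0_Gk | apply C0_Jm | apply C0_JG].

Lemma bsum_quarter f f1 m : (forall x, is_derive f x (f1 x)) -> C0 f1 -> (forall x, f (x + 2*PI) = f x) ->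
  cA f 1 = 0 -> cB f 1 = 0 -> 4 * bsum f m <= bsum f1 m.
Proof.
  intros Hd Hc Hp H1 H2. induction m; cbn [bsum]. lra.
  destruct (coef_der f f1 (S m) Hd Hc Hp) as [E1 E2]. rewrite E1, E2.
  destruct m.
  - rewrite H1, H2. simpl. lra.
  - assert (2 <= INR (S (S m))) by (rewrite !S_INR; pose proof (pos_INR m); lra).
    assert (0 <= cA f (S (S m)) ^ 2) by apply pow2_ge_0.
    assert (0 <= cB f (S (S m)) ^ 2) by apply pow2_ge_0.
    replace ((INR (S (S m)) * cB f (S (S m))) ^ 2 + (- INR (S (S m)) * cA f (S (S m))) ^ 2)
      with (INR (S (S m)) ^ 2 * (cA f (S (S m)) ^ 2 + cB f (S (S m)) ^ 2)) by ring.
    assert (4 <= INR (S (S m)) ^ 2) by nra.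
    assert (4 * (cA f (S (S m)) ^ 2 + cB f (S (S m)) ^ 2) <= INR (S (S m)) ^ 2 * (cA f (S (S m)) ^ 2 + cB f (S (S m)) ^ 2)).
    { apply Rmult_le_compat_r; lra. }
    lra.
Qed.

Lemma Jm_bound f f1 m : (forall x, is_derive f x (f1 x)) -> C0 f1 -> (forall x, f (x + 2*PI) = f x) ->
  cA f 0 = 0 -> cA f 1 = 0 -> cB f 1 = 0 ->
  RInt (fun x => f x * Jm f m x) 0 (2*PI) <= PI / 2 * RInt (fun x => f1 x ^ 2) 0 (2*PI).
Proof.
  intros Hd Hc Hp H0 H1 H2.
  assert (Cf : C0 f) by (apply C0_of_der; intros x; exists (f1 x); auto).
  rewrite fJm by auto. rewrite H0.
  pose proof (bsum_quarter f f1 m Hd Hc Hp H1 H2). pose proof (bessel f1 m Hc). lra.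
Qed.

Lemma conv_sym f K x : C0 f -> C0 K -> (forall x, f (x + 2*PI) = f x) -> (forall x, K (x + 2*PI) = K x) ->
  RInt (fun y => f y * K (x - y)) 0 (2*PI) = RInt (fun t => f (x - t) * K t) (-PI) PI :> R.
Proof.
  intros Cf CK Pf PK.
  assert (H1 := RInt_comp_lin (fun y => f y * K (x - y)) (-1) x x (x - 2*PI)).
  replace (-1 * x + x) with 0 in H1 by ring.
  replace (-1 * (x - 2*PI) + x) with (2*PI) in H1 by ring.
  rewrite <- H1 by (apply cont_ex; c0s).
  assert (PG : forall t, f (x - (t + 2*PI)) * K (t + 2*PI) = f (x - t) * K t).
  { intros t. rewrite PK. f_equal. rewrite <- (Pf (x - (t + 2*PI))). f_equal. ring. }
  rewrite int_sym by (auto || c0s).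
  rewrite <- (per_interval (fun t => f (x - t) * K t) (x - 2*PI)) by (auto || c0s).
  replace (x - 2*PI + 2*PI) with x by ring.
  rewrite (RInt_swap' (fun t => f (x - t) * K t)) by c0s.
  rewrite <- RInt_neg by c0s.
  apply RInt_ext. intros t _. unfold scal; simpl; unfold mult; simpl.
  replace (x - (-1 * t + x)) with t by ring. replace (-1 * t + x) with (x - t) by ring. rr; ring.
Qed.

Lemma Dk_even m t : Dk m (- t) = Dk m t.
Proof. induction m; cbn [Dk]; auto. rewrite IHm. replace (INR (S m) * - t) with (- (INR (S m) * t)) by ring. rewrite cos_neg. auto. Qed.
Lemma Gk_even N t : Gk N (- t) = Gk N t.
Proof. induction N; cbn [Gk]; auto. rewrite IHN, Dk_even. auto. Qed.

Lemma odd_Gk N : RInt (fun t => t * Gk N t) (-PI) PI = 0 :> R.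
Proof.
  assert (H1 := RInt_comp_lin (fun t => t * Gk N t) (-1) 0 (-PI) PI).
  replace (-1 * - PI + 0) with PI in H1 by ring.
  replace (-1 * PI + 0) with (-PI) in H1 by ring.
  rewrite (RInt_swap' (fun t => t * Gk N t)) in H1 by c0s.
  rewrite (RInt_ext _ (fun t => t * Gk N t)) in H1.
  - assert (RInt (fun t => t * Gk N t) (-PI) PI = - RInt (fun t => t * Gk N t) (-PI) PI :> R).
    { apply H1. apply cont_ex; c0s. }
    lra.
  - intros t _. unfold scal; simpl; unfold mult; simpl. replace (-1 * t + 0) with (- t) by ring.
    rewrite Gk_even. rr; ring.
Qed.


Lemma mvt_b (f f1 : R -> R) a b : (forall x, is_derive f x (f1 x)) ->
  exists c, Rmin a b <= c <= Rmax a b /\ f b - f a = f1 c * (b - a).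
Proof.
  intros Hd. apply (MVT_gen f a b f1).
  - intros; auto.
  - intros. apply cpt_of_der. exists (f1 x); auto.
Qed.

Lemma taylor2 f f1 f2 M x t : (forall x, is_derive f x (f1 x)) -> (forall x, is_derive f1 x (f2 x)) ->
  (forall z, -PI <= z <= 3*PI -> Rabs (f2 z) <= M) -> 0 <= x <= 2*PI -> -PI <= t <= PI ->
  Rabs (f (x - t) - f x + t * f1 x) <= M * t ^ 2.
Proof.
  intros H1 H2 HM Hx Ht.
  destruct (mvt_b f f1 x (x - t) H1) as [c [Hc Ec]].
  destruct (mvt_b f1 f2 x c H2) as [d [Hd Ed]].
  assert (Hc' : Rabs (c - x) <= Rabs t).
  { unfold Rmin, Rmax in Hc. destruct (Rle_dec x (x - t)); apply Rabs_le; 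
    destruct (Rle_dec 0 t); [rewrite Rabs_right by lra | rewrite Rabs_left by lra | rewrite Rabs_right by lra | rewrite Rabs_left by lra]; lra. }
  assert (Hd' : -PI <= d <= 3*PI).
  { unfold Rmin, Rmax in Hc, Hd. destruct (Rle_dec x (x - t)); destruct (Rle_dec x c); lra. }
  replace (f (x - t) - f x + t * f1 x) with (- t * (f2 d * (c - x))).
  2: { rewrite <- Ed. replace (f (x - t) - f x) with (f1 c * (x - t - x)) by (rewrite Ec; ring). ring. }
  rewrite !Rabs_mult, Rabs_Ropp. rewrite <- (pow2_abs t).
  pose proof (HM d Hd'). pose proof (Rabs_pos t). pose proof (Rabs_pos (c - x)). pose proof (Rabs_pos (f2 d)).
  assert (Rabs (f2 d) * Rabs (c - x) <= M * Rabs t) by (apply Rmult_le_compat; auto).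
  nra.
Qed.

Lemma Ebound f f1 f2 M N x : (forall x, is_derive f x (f1 x)) -> (forall x, is_derive f1 x (f2 x)) ->
  (forall z, -PI <= z <= 3*PI -> Rabs (f2 z) <= M) -> 0 <= x <= 2*PI ->
  Rabs (RInt (fun t => f (x - t) * Gk N t) (-PI) PI - f x * RInt (Gk N) (-PI) PI)
   <= 18 * M * RInt (fun t => (1 - cos t) * Gk N t) (-PI) PI.
Proof.
  intros H1 H2 HM Hx.
  assert (Cf : C0 f) by (apply C0_of_der; intros z; exists (f1 z); auto).
  assert (Cf1 : C0 f1) by (apply C0_of_der; intros z; exists (f2 z); auto).
  assert (M0 : 0 <= M) by (pose proof (HM 0 ltac:(pose proof PI_RGT_0; lra)); pose proof (Rabs_pos (f2 0)); lra).
  assert (E : RInt (fun t => f (x - t) * Gk N t) (-PI) PI - f x * RInt (Gk N) (-PI) PI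
     = RInt (fun t => (f (x - t) - f x + t * f1 x) * Gk N t) (-PI) PI :> R).
  { rewrite (RInt_ext (fun t => (f (x - t) - f x + t * f1 x) * Gk N t)
       (fun t => (f (x - t) * Gk N t - f x * Gk N t) + f1 x * (t * Gk N t))) by (intros; rr; ring).
    lin. rewrite odd_Gk. ring. }
  rewrite E. apply Rabs_le.
  assert (Hp : forall t, -PI < t < PI -> Rabs ((f (x - t) - f x + t * f1 x) * Gk N t) <= 18 * M * ((1 - cos t) * Gk N t)).
  { intros t Ht. destruct (Req_dec t 0) as [->|Hn].
    - rewrite cos_0. replace (x - 0) with x by ring. replace (f x - f x + 0 * f1 x) with 0 by ring.
      rewrite Rmult_0_l, Rabs_R0. lra.
    - pose proof (t2_bound t ltac:(lra)).
      assert (0 < t ^ 2) by (apply pow2_gt_0; auto).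
      assert (G0 : 0 <= Gk N t) by (apply Gk_nonneg; lra).
      rewrite Rabs_mult, (Rabs_right (Gk N t)) by lra.
      pose proof (taylor2 f f1 f2 M x t H1 H2 HM Hx ltac:(lra)) as Ht2.
      assert (Hm : M * t ^ 2 <= 18 * M * (1 - cos t)) by nra.
      replace (18 * M * ((1 - cos t) * Gk N t)) with (18 * M * (1 - cos t) * Gk N t) by ring.
      apply Rmult_le_compat_r; lra. }
  pose proof PI_RGT_0.
  split.
  - rewrite <- RInt_scl by c0s. rewrite <- (RInt_neg (fun t => 18 * M * ((1 - cos t) * Gk N t))) by c0s.
    apply RInt_le; try lra; try (apply cont_ex; c0s).
    intros t Ht. specialize (Hp t Ht).
    pose proof (Rle_abs (- ((f (x - t) - f x + t * f1 x) * Gk N t))) as Hq. rewrite Rabs_Ropp in Hq. lra.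
  - rewrite <- RInt_scl by c0s.
    apply RInt_le; try lra; try (apply cont_ex; c0s).
    intros t Ht. specialize (Hp t Ht). pose proof (Rle_abs ((f (x - t) - f x + t * f1 x) * Gk N t)). lra.
Qed.

Ltac c0_extra ::= first [apply C0_Sf | apply C0_Dk | apply C0_Gk | apply C0_Jm | apply C0_JG].

Lemma cos_2pi t : cos (t + 2*PI) = cos t.
Proof. rewrite cos_plus, cos_2PI, sin_2PI. ring. Qed.
Lemma sin_2pi t : sin (t + 2*PI) = sin t.
Proof. rewrite sin_plus, cos_2PI, sin_2PI. ring. Qed.

Lemma abs_max (g : R -> R) a b : a <= b -> C0 g -> exists M, forall z, a <= z <= b -> Rabs (g z) <= M.
Proof.
  intros Hab Hg.
  destruct (continuity_ab_maj (fun z => Rabs (g z)) a b Hab) as [Mx [HM _]].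
  - intros c _. apply (continuity_pt_comp g Rabs). apply continuity_pt_filterlim. apply C0_pt; auto.
    apply Rcontinuity_abs.
  - exists (Rabs (g Mx)). auto.
Qed.

Lemma wirt f f1 f2 : (forall x, is_derive f x (f1 x)) -> (forall x, is_derive f1 x (f2 x)) -> C0 f2 ->
  (forall x, f (x + 2*PI) = f x) ->
  RInt f 0 (2*PI) = 0 -> RInt (fun x => f x * cos x) 0 (2*PI) = 0 -> RInt (fun x => f x * sin x) 0 (2*PI) = 0 ->
  4 * RInt (fun x => f x ^ 2) 0 (2*PI) <= RInt (fun x => f1 x ^ 2) 0 (2*PI).
Proof.
  intros H1 H2 C2 Hp I0 Ic Is.
  assert (Cf : C0 f) by (apply C0_of_der; intros z; exists (f1 z); auto).
  assert (Cf1 : C0 f1) by (apply C0_of_der; intros z; exists (f2 z); auto).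
  pose proof PI_RGT_0 as Hpi.
  assert (A0 : cA f 0 = 0) by (rewrite cA0; auto).
  assert (A1 : cA f 1 = 0).
  { unfold cA. rewrite (RInt_ext _ (fun x => f x * cos x)). exact Ic. intros. simpl INR. rewrite Rmult_1_l. auto. }
  assert (B1 : cB f 1 = 0).
  { unfold cB. rewrite (RInt_ext _ (fun x => f x * sin x)). exact Is. intros. simpl INR. rewrite Rmult_1_l. auto. }
  destruct (abs_max f2 (-PI) (3*PI) ltac:(lra) C2) as [M HM].
  destruct (abs_max f 0 (2*PI) ltac:(lra) Cf) as [Mf HMf].
  assert (M0 : 0 <= M) by (pose proof (HM 0 ltac:(lra)); pose proof (Rabs_pos (f2 0)); lra).
  assert (Mf0 : 0 <= Mf) by (pose proof (HMf 0 ltac:(lra)); pose proof (Rabs_pos (f 0)); lra).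
  set (If := RInt (fun x => f x ^ 2) 0 (2*PI)).
  set (If1 := RInt (fun x => f1 x ^ 2) 0 (2*PI)).
  assert (Key : forall N, 2 * PI * INR (S N) * If - 2 * PI * (Mf * (36 * PI * M)) <= INR (S N) * (PI / 2 * If1)).
  { intros N.
    assert (Up := fJG_le f N _ Cf (fun m => Jm_bound f f1 m H1 Cf1 Hp A0 A1 B1)).
    assert (Pt : forall x, 0 < x < 2*PI -> 2 * PI * INR (S N) * f x ^ 2 - Mf * (36 * PI * M) <= f x * JG f N x).
    { intros x Hx.
      rewrite <- JG_eq by auto. rewrite conv_sym by (auto || apply C0_Gk || apply Gk_per).
      pose proof (Ebound f f1 f2 M N x H1 H2 HM ltac:(lra)) as EB.
      rewrite (int_sym (Gk N)) in EB by (auto || apply C0_Gk || apply Gk_per).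
      rewrite int_Gk in EB.
      rewrite (int_sym (fun t => (1 - cos t) * Gk N t)) in EB.
      2: c0s.
      2: { intros t. rewrite cos_2pi, Gk_per. auto. }
      rewrite int_Gk_1c in EB.
      set (J := RInt (fun t => f (x - t) * Gk N t) (-PI) PI) in *.
      assert (Hfx : Rabs (f x) <= Mf) by (apply HMf; lra).
      assert (Habs : Rabs (f x * (J - f x * (2 * PI * INR (S N)))) <= Mf * (36 * PI * M)).
      { rewrite Rabs_mult. apply Rmult_le_compat; try apply Rabs_pos; auto. lra. }
      pose proof (Rle_abs (- (f x * (J - f x * (2 * PI * INR (S N)))))) as Hq. rewrite Rabs_Ropp in Hq.
      lra. }
    assert (Low : RInt (fun x => 2 * PI * INR (S N) * f x ^ 2 - Mf * (36 * PI * M)) 0 (2*PI)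
                  <= RInt (fun x => f x * JG f N x) 0 (2*PI)).
    { apply RInt_le; try lra; try (apply cont_ex; c0s). intros; apply Pt; auto. }
    rewrite RInt_sub in Low by c0s. rewrite RInt_scl in Low by c0s. rewrite RInt_cst in Low.
    unfold If, If1 in *. lra. }
  destruct (Rle_or_lt (4 * If) If1) as [Hok|Hbad]; auto.
  exfalso.
  set (d := 2 * PI * If - PI / 2 * If1).
  assert (d > 0) by (unfold d; nra).
  destruct (INR_archimed d (2 * PI * (Mf * (36 * PI * M))) H) as [n Hn].
  specialize (Key n). rewrite S_INR in Key.
  assert (INR (S n) * d <= 2 * PI * (Mf * (36 * PI * M))) by (rewrite S_INR; unfold d; nra).
  rewrite S_INR in H0. lra.
Qed.

Definition th (k j : nat) := 2*PI*INR j/INR k.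
Definition Av (k : nat) (p : R -> R) (s : R) := / INR k * sum_f_R0 (fun j => p (s + 2*PI*INR j/INR k)) (k - 1).
Definition Am (k : nat) (p : R -> R) (s : R) := / INR k * sum_f_R0 (fun j => p (s - 2*PI*INR j/INR k)) (k - 1).

Lemma sumC0 (F : nat -> R -> R) n : (forall j, C0 (F j)) -> C0 (fun x => sum_f_R0 (fun j => F j x) n).
Proof.
  intros H. induction n; simpl. apply (C0_ext (F 0%nat)); auto.
  apply (C0_add (fun x => sum_f_R0 (fun j => F j x) n) (F (S n))); auto.
Qed.

Lemma RInt_sum (F : nat -> R -> R) n a b : (forall j, C0 (F j)) ->
  RInt (fun x => sum_f_R0 (fun j => F j x) n) a b = sum_f_R0 (fun j => RInt (F j) a b) n :> R.
Proof.
  intros H. induction n; simpl. apply RInt_ext; auto.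
  rewrite (RInt_add (fun x => sum_f_R0 (fun j => F j x) n) (F (S n))); auto.
  rewrite IHn; auto. apply sumC0; auto.
Qed.

Lemma der_sum (F dF : nat -> R -> R) n x : (forall j, is_derive (F j) x (dF j x)) ->
  is_derive (fun y => sum_f_R0 (fun j => F j y) n) x (sum_f_R0 (fun j => dF j x) n).
Proof.
  intros H. induction n; simpl. apply (is_derive_ext (F 0%nat)); auto.
  apply (is_derive_plus (fun y => sum_f_R0 (fun j => F j y) n) (F (S n))); auto.
Qed.

Lemma C0_Av k p : C0 p -> C0 (Av k p).
Proof.
  intros H. unfold Av. apply (C0_scal (/ INR k) (fun s => sum_f_R0 (fun j => p (s + 2*PI*INR j/INR k)) (k-1))).
  apply (sumC0 (fun j s => p (s + 2*PI*INR j/INR k))). intros j. c0.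
Qed.
Lemma C0_Am k p : C0 p -> C0 (Am k p).
Proof.
  intros H. unfold Am. apply (C0_scal (/ INR k) (fun s => sum_f_R0 (fun j => p (s - 2*PI*INR j/INR k)) (k-1))).
  apply (sumC0 (fun j s => p (s - 2*PI*INR j/INR k))). intros j. c0.
Qed.

Lemma der_Av k p p1 x : (forall x, is_derive p x (p1 x)) -> is_derive (Av k p) x (Av k p1 x).
Proof.
  intros H. unfold Av. apply is_derive_scal.
  apply (der_sum (fun j s => p (s + 2*PI*INR j/INR k)) (fun j s => p1 (s + 2*PI*INR j/INR k))).
  intros j. auto_derive. exists (p1 (x + 2*PI*INR j/INR k)); auto.
  rewrite (is_derive_unique _ _ _ (H _)). ring.
Qed.

Lemma int_Av k p : (0 < k)%nat -> C0 p -> (forall x, p (x + 2*PI) = p x) ->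
  RInt (Av k p) 0 (2*PI) = RInt p 0 (2*PI) :> R.
Proof.
  intros Hk Hc Hp. unfold Av.
  rewrite (RInt_scl (fun s => sum_f_R0 (fun j => p (s + 2*PI*INR j/INR k)) (k-1))).
  2: apply (sumC0 (fun j s => p (s + 2*PI*INR j/INR k))); intros j; c0.
  rewrite (RInt_sum (fun j s => p (s + 2*PI*INR j/INR k))) by (intros j; c0).
  rewrite (sum_eq _ (fun _ => RInt p 0 (2*PI))).
  - rewrite sum_cte. replace (S (k - 1)) with k by lia. field. apply not_0_INR; lia.
  - intros j _. apply per_shift; auto.
Qed.

Lemma sum_shift (F : nat -> R) n : sum_f_R0 (fun j => F (S j)) n = sum_f_R0 F n + F (S n) - F O.
Proof.
  pose proof (tech5 F n). pose proof (decomp_sum F (S n) ltac:(lia)). simpl in H0. lra.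
Qed.

Lemma Av_shift1 k p s : (0 < k)%nat -> (forall x, p (x + 2*PI) = p x) -> Av k p (s + 2*PI/INR k) = Av k p s.
Proof.
  intros Hk Hp. unfold Av. f_equal.
  assert (INR k <> 0) by (apply not_0_INR; lia).
  rewrite (sum_eq _ (fun j => (fun j => p (s + 2*PI*INR j/INR k)) (S j))).
  - rewrite (sum_shift (fun j => p (s + 2*PI*INR j/INR k))). replace (S (k-1)) with k by lia. 
    replace (s + 2*PI*INR k/INR k) with (s + 2*PI) by (field; auto). rewrite Hp.
    simpl INR. replace (s + 2*PI*0/INR k) with s by (field; auto). ring.
  - intros j _. f_equal. rewrite S_INR. field; auto.
Qed.

Lemma Av_shift k p s j : (0 < k)%nat -> (forall x, p (x + 2*PI) = p x) -> Av k p (s + 2*PI*INR j/INR k) = Av k p s.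
Proof.
  intros Hk Hp. assert (INR k <> 0) by (apply not_0_INR; lia).
  induction j.
  - simpl INR. f_equal. field; auto.
  - replace (s + 2*PI*INR (S j)/INR k) with ((s + 2*PI*INR j/INR k) + 2*PI/INR k) by (rewrite S_INR; field; auto).
    rewrite Av_shift1; auto.
Qed.

Lemma Am_Av k p s : (0 < k)%nat -> (forall x, p (x + 2*PI) = p x) -> Am k (Av k p) s = Av k p s.
Proof.
  intros Hk Hp. assert (INR k <> 0) by (apply not_0_INR; lia). unfold Am at 1.
  rewrite (sum_eq _ (fun _ => Av k p s)).
  - rewrite sum_cte. replace (S (k - 1)) with k by lia. field; auto.
  - intros j _. rewrite <- (Av_shift k p (s - 2*PI*INR j/INR k) j); auto. f_equal; ring.
Qed.

Lemma Av_per k p s : (forall x, p (x + 2*PI) = p x) -> Av k p (s + 2*PI) = Av k p s.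
Proof.
  intros Hp. unfold Av. f_equal. apply sum_eq. intros j _.
  replace (s + 2*PI + 2*PI*INR j/INR k) with ((s + 2*PI*INR j/INR k) + 2*PI) by ring. auto.
Qed.

Lemma Av_adj k p q : C0 p -> C0 q -> (forall x, p (x + 2*PI) = p x) -> (forall x, q (x + 2*PI) = q x) ->
  RInt (fun s => Av k p s * q s) 0 (2*PI) = RInt (fun s => p s * Am k q s) 0 (2*PI) :> R.
Proof.
  intros Cp Cq Pp Pq.
  assert (CAm := C0_Am k q Cq).
  unfold Av.
  rewrite (RInt_ext _ (fun s => / INR k * sum_f_R0 (fun j => p (s + 2*PI*INR j/INR k) * q s) (k-1))).
  2: { intros. rr. rewrite Rmult_assoc. f_equal. rewrite (Rmult_comm _ (q x)), scal_sum. apply sum_eq. intros; ring. }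
  rewrite (RInt_scl (fun s => sum_f_R0 (fun j => p (s + 2*PI*INR j/INR k) * q s) (k-1))).
  2: apply (sumC0 (fun j s => p (s + 2*PI*INR j/INR k) * q s)); intros j; c0.
  rewrite (RInt_sum (fun j s => p (s + 2*PI*INR j/INR k) * q s)) by (intros j; c0).
  unfold Am.
  rewrite (RInt_ext (fun s => p s * (/ INR k * sum_f_R0 (fun j => q (s - 2*PI*INR j/INR k)) (k-1)))
     (fun s => / INR k * sum_f_R0 (fun j => p s * q (s - 2*PI*INR j/INR k)) (k-1))).
  2: { intros. rr. rewrite <- Rmult_assoc, (Rmult_comm (p x)), Rmult_assoc. f_equal. rewrite scal_sum. apply sum_eq. intros; ring. }
  rewrite (RInt_scl (fun s => sum_f_R0 (fun j => p s * q (s - 2*PI*INR j/INR k)) (k-1))).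
  2: apply (sumC0 (fun j s => p s * q (s - 2*PI*INR j/INR k))); intros j; c0.
  rewrite (RInt_sum (fun j s => p s * q (s - 2*PI*INR j/INR k))) by (intros j; c0).
  f_equal. apply sum_eq. intros j _.
  rewrite <- (per_shift (fun s => p s * q (s - 2*PI*INR j/INR k)) (2*PI*INR j/INR k)).
  - apply RInt_ext. intros. rr. f_equal. f_equal. ring.
  - c0.
  - intros x. rewrite Pp. f_equal. replace (x + 2*PI - 2*PI*INR j/INR k) with ((x - 2*PI*INR j/INR k) + 2*PI) by ring. auto.
Qed.

Lemma trig_sums k : (2 <= k)%nat ->
  sum_f_R0 (fun j => cos (2*PI*INR j/INR k)) (k-1) = 0 /\ sum_f_R0 (fun j => sin (2*PI*INR j/INR k)) (k-1) = 0.
Proof.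
  intros Hk. assert (Kp : INR k <> 0) by (apply not_0_INR; lia).
  assert (K2 : 2 <= INR k) by (replace 2 with (INR 2) by (simpl; ring); apply le_INR; auto).
  pose proof PI_RGT_0.
  set (c1 := cos (2*PI/INR k)). set (s1 := sin (2*PI/INR k)).
  set (Sc := sum_f_R0 (fun j => cos (2*PI*INR j/INR k)) (k-1)).
  set (Ss := sum_f_R0 (fun j => sin (2*PI*INR j/INR k)) (k-1)).
  assert (Hc1 : c1 < 1).
  { assert (0 < 2*PI/INR k <= PI).
    { split. apply Rdiv_lt_0_compat; lra. apply Rmult_le_reg_r with (INR k); [lra|]. field_simplify; nra. }
    pose proof (t2_bound (2*PI/INR k) ltac:(lra)). assert (0 < (2*PI/INR k)^2) by (apply pow2_gt_0; lra).
    unfold c1; lra. }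
  assert (Hcs : c1 * c1 + s1 * s1 = 1) by (unfold c1, s1; pose proof (sin2_cos2 (2*PI/INR k)); unfold Rsqr in *; lra).
  assert (E1 : c1 * Sc - s1 * Ss = Sc).
  { unfold Sc, Ss. rewrite !scal_sum, <- minus_sum.
    pose proof (sum_shift (fun j => cos (2*PI*INR j/INR k)) (k-1)) as E.
    replace (S (k-1)) with k in E by lia.
    replace (2*PI*INR k/INR k) with (2*PI) in E by (field; auto). rewrite cos_2PI in E.
    change (INR 0) with 0 in E. replace (2*PI*0/INR k) with 0 in E by (field; auto). rewrite cos_0 in E.
    replace (sum_f_R0 (fun j => cos (2*PI*INR j/INR k)) (k-1)) with (sum_f_R0 (fun j => cos (2*PI*INR (S j)/INR k)) (k-1)) by lra.
    apply sum_eq. intros j _. rewrite S_INR. replace (2*PI*(INR j + 1)/INR k) with (2*PI*INR j/INR k + 2*PI/INR k) by (field; auto).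
    rewrite cos_plus. unfold c1, s1. ring. }
  assert (E2 : s1 * Sc + c1 * Ss = Ss).
  { unfold Sc, Ss. rewrite !scal_sum, <- plus_sum.
    pose proof (sum_shift (fun j => sin (2*PI*INR j/INR k)) (k-1)) as E.
    replace (S (k-1)) with k in E by lia.
    replace (2*PI*INR k/INR k) with (2*PI) in E by (field; auto). rewrite sin_2PI in E.
    change (INR 0) with 0 in E. replace (2*PI*0/INR k) with 0 in E by (field; auto). rewrite sin_0 in E.
    replace (sum_f_R0 (fun j => sin (2*PI*INR j/INR k)) (k-1)) with (sum_f_R0 (fun j => sin (2*PI*INR (S j)/INR k)) (k-1)) by lra.
    apply sum_eq. intros j _. rewrite S_INR. replace (2*PI*(INR j + 1)/INR k) with (2*PI*INR j/INR k + 2*PI/INR k) by (field; auto).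
    rewrite sin_plus. unfold c1, s1. ring. }
  assert (Sc * Sc + Ss * Ss = 0) by nra.
  split; nra.
Qed.

Lemma Am_cos k s : (2 <= k)%nat -> Am k cos s = 0.
Proof.
  intros Hk. destruct (trig_sums k Hk) as [H1 H2]. unfold Am.
  rewrite (sum_eq _ (fun j => cos (2*PI*INR j/INR k) * cos s + sin (2*PI*INR j/INR k) * sin s)).
  - rewrite plus_sum, <- !scal_sum. rewrite (Rmult_comm (cos s)), (Rmult_comm (sin s)). rewrite H1, H2. ring.
  - intros j _. rewrite cos_minus. ring.
Qed.

Lemma Am_sin k s : (2 <= k)%nat -> Am k sin s = 0.
Proof.
  intros Hk. destruct (trig_sums k Hk) as [H1 H2]. unfold Am.
  rewrite (sum_eq _ (fun j => cos (2*PI*INR j/INR k) * sin s - sin (2*PI*INR j/INR k) * cos s)).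
  - rewrite minus_sum, <- !scal_sum. rewrite (Rmult_comm (sin s)), (Rmult_comm (cos s)). rewrite H1, H2. ring.
  - intros j _. rewrite sin_minus. ring.
Qed.

Lemma der_per (f f1 : R -> R) : (forall x, is_derive f x (f1 x)) -> (forall x, f (x + 2*PI) = f x) ->
  forall x, f1 (x + 2*PI) = f1 x.
Proof.
  intros Hd Hp x.
  assert (D : is_derive f x (f1 (x + 2*PI))).
  { apply (is_derive_ext (fun y => f (y + 2*PI))). intros; apply Hp.
    evar (l : R). replace (f1 (x + 2*PI)) with l. apply (is_derive_comp f (fun y => y + 2*PI)).
    apply Hd. auto_derive; auto. unfold l. unfold scal; simpl; unfold mult; simpl. ring. }
  apply is_derive_unique in D. rewrite (is_derive_unique _ _ _ (Hd x)) in D. auto.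
Qed.

Lemma int_c1 : RInt (fun x => cos x) 0 (2*PI) = 0 :> R.
Proof. rewrite (RInt_ext _ (fun x => cos (INR 1 * x))). apply int_cos_n; lia. intros. simpl INR. rr. rewrite Rmult_1_l. auto. Qed.
Lemma int_s1 : RInt (fun x => sin x) 0 (2*PI) = 0 :> R.
Proof. rewrite (RInt_ext _ (fun x => sin (INR 1 * x))). apply int_sin_n. intros. simpl INR. rr. rewrite Rmult_1_l. auto. Qed.
Lemma int_cc1 : RInt (fun x => cos x * cos x) 0 (2*PI) = PI :> R.
Proof. rewrite (RInt_ext _ (fun x => cos (INR 1 * x) * cos (INR 1 * x))). apply int_cc_eq; lia. intros. simpl INR. rr. rewrite Rmult_1_l. auto. Qed.
Lemma int_ss1 : RInt (fun x => sin x * sin x) 0 (2*PI) = PI :> R.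
Proof. rewrite (RInt_ext _ (fun x => sin (INR 1 * x) * sin (INR 1 * x))). apply int_ss_eq; lia. intros. simpl INR. rr. rewrite Rmult_1_l. auto. Qed.
Lemma int_sc1 : RInt (fun x => sin x * cos x) 0 (2*PI) = 0 :> R.
Proof. rewrite (RInt_ext _ (fun x => sin (INR 1 * x) * cos (INR 1 * x))). apply int_sc. intros. simpl INR. rr. rewrite Rmult_1_l. auto. Qed.


Lemma length_eq (h h1 h2 : R -> R) : (forall x, is_derive h x (h1 x)) -> (forall x, is_derive h1 x (h2 x)) -> C0 h2 ->
  (forall x, h (x + 2*PI) = h x) -> (forall s, 0 < h s + h2 s) ->
  oval_length h = RInt h 0 (2*PI).
Proof.
  intros H1 H2 C2 Hp Hpos.
  assert (E1 : forall x, Derive h x = h1 x) by (intros; apply is_derive_unique; auto).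
  assert (HD1 : forall x, is_derive (Derive h) x (h2 x)).
  { intros x. apply (is_derive_ext h1). intros; rewrite E1; auto. auto. }
  assert (C1 : C0 h1) by (apply C0_of_der; intros z; exists (h2 z); auto).
  assert (C0h : C0 h) by (apply C0_of_der; intros z; exists (h1 z); auto).
  unfold oval_length.
  rewrite (RInt_ext _ (fun s => h s + h2 s)).
  - rewrite RInt_add by c0s. rewrite (ftc h1 h2) by auto.
    rewrite <- (der_per h h1 H1 Hp 0). rewrite Rplus_0_l. ring.
  - intros s _.
    assert (Dx : Derive (curve_x h) s = - (h s + h2 s) * sin s).
    { apply is_derive_unique. unfold curve_x. auto_derive.
      - repeat split; [exists (h1 s); auto | exists (h2 s); auto].
      - rewrite (Der_eq h h1 s H1), (Der_eq (Derive h) h2 s HD1), E1. ring. }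
    assert (Dy : Derive (curve_y h) s = (h s + h2 s) * cos s).
    { apply is_derive_unique. unfold curve_y. auto_derive.
      - repeat split; [exists (h1 s); auto | exists (h2 s); auto].
      - rewrite (Der_eq h h1 s H1), (Der_eq (Derive h) h2 s HD1), E1. ring. }
    rewrite Dx, Dy. rr.
    replace ((- (h s + h2 s) * sin s) ^ 2 + ((h s + h2 s) * cos s) ^ 2) with ((h s + h2 s) ^ 2).
    + apply sqrt_pow2. specialize (Hpos s). lra.
    + assert (Hsc : sin s * sin s + cos s * cos s = 1) by (pose proof (sin2_cos2 s); unfold Rsqr in *; lra).
      transitivity ((h s + h2 s) ^ 2 * (sin s * sin s + cos s * cos s)); [rewrite Hsc; ring | ring].
Qed.

Lemma area_eq (h h1 h2 : R -> R) : (forall x, is_derive h x (h1 x)) -> (forall x, is_derive h1 x (h2 x)) -> C0 h2 ->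
  (forall x, h (x + 2*PI) = h x) ->
  oval_area h = / 2 * (RInt (fun s => h s ^ 2) 0 (2*PI) - RInt (fun s => h1 s ^ 2) 0 (2*PI)).
Proof.
  intros H1 H2 C2 Hp.
  assert (E1 : forall x, Derive h x = h1 x) by (intros; apply is_derive_unique; auto).
  assert (HD1 : forall x, is_derive (Derive h) x (h2 x)).
  { intros x. apply (is_derive_ext h1). intros; rewrite E1; auto. auto. }
  assert (C1 : C0 h1) by (apply C0_of_der; intros z; exists (h2 z); auto).
  assert (C0h : C0 h) by (apply C0_of_der; intros z; exists (h1 z); auto).
  unfold oval_area. f_equal.
  rewrite (RInt_ext _ (fun s => h s ^ 2 + h s * h2 s)).
  - assert (F : RInt (fun s => h1 s ^ 2 + h s * h2 s) 0 (2*PI) = h (2*PI) * h1 (2*PI) - h 0 * h1 0 :> R).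
    { apply (ftc (fun s => h s * h1 s)); [|c0s]. intros x. auto_derive.
      - split; [exists (h1 x); auto | split; [exists (h2 x); auto | auto]].
      - rewrite (Der_eq h h1 x H1), (Der_eq h1 h2 x H2). ring. }
    rewrite RInt_add in F by c0s. rewrite RInt_add by c0s.
    rewrite <- (der_per h h1 H1 Hp 0), <- (Hp 0), Rplus_0_l in F. lra.
  - intros s _.
    assert (Dx : Derive (curve_x h) s = - (h s + h2 s) * sin s).
    { apply is_derive_unique. unfold curve_x. auto_derive.
      - repeat split; [exists (h1 s); auto | exists (h2 s); auto].
      - rewrite (Der_eq h h1 s H1), (Der_eq (Derive h) h2 s HD1), E1. ring. }
    assert (Dy : Derive (curve_y h) s = (h s + h2 s) * cos s).
    { apply is_derive_unique. unfold curve_y. auto_derive.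
      - repeat split; [exists (h1 s); auto | exists (h2 s); auto].
      - rewrite (Der_eq h h1 s H1), (Der_eq (Derive h) h2 s HD1), E1. ring. }
    rewrite Dx, Dy. rr. unfold curve_x, curve_y. rewrite E1.
    assert (Hsc : sin s * sin s + cos s * cos s = 1) by (pose proof (sin2_cos2 s); unfold Rsqr in *; lra).
    transitivity (h s * (h s + h2 s) * (sin s * sin s + cos s * cos s)); [ring | rewrite Hsc; ring].
Qed.
Lemma int_c1e : RInt cos 0 (2*PI) = 0 :> R.
Proof. exact int_c1. Qed.
Lemma int_s1e : RInt sin 0 (2*PI) = 0 :> R.
Proof. exact int_s1. Qed.

Ltac c0_extra ::= first [apply C0_cos1 | apply C0_sin1 | (apply C0_Av; assumption)].

Lemma main_gen (k : nat) (h h1 h2 : R -> R) : (2 < k)%nat ->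
  (forall x, is_derive h x (h1 x)) -> (forall x, is_derive h1 x (h2 x)) -> C0 h2 ->
  (forall x, h (x + 2*PI) = h x) -> (forall s, 0 < h s + h2 s) ->
  (oval_length h) ^ 2 - 4 * PI * oval_area h - 4 * PI * Rabs (ops_area k h)
    >= 6 * PI * (support_dist2 h (ops_plus_disk_support k h)) ^ 2.
Proof.
  intros Hk H1 H2 C2 Hp Hpos.
  assert (Hk2 : (2 <= k)%nat) by lia. assert (Hk0 : (0 < k)%nat) by lia.
  pose proof PI_RGT_0 as Hpi.
  assert (C1 : C0 h1) by (apply C0_of_der; intros z; exists (h2 z); auto).
  assert (C0h : C0 h) by (apply C0_of_der; intros z; exists (h1 z); auto).
  assert (Hp1 := der_per h h1 H1 Hp).
  assert (CA : C0 (Av k h)) by (apply C0_Av; auto).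
  assert (CA1 : C0 (Av k h1)) by (apply C0_Av; auto).
  assert (CA2 : C0 (Av k h2)) by (apply C0_Av; auto).
  assert (dA : forall x, is_derive (Av k h) x (Av k h1 x)) by (intros; apply der_Av; auto).
  assert (dA1 : forall x, is_derive (Av k h1) x (Av k h2 x)) by (intros; apply der_Av; auto).
  assert (pA : forall x, Av k h (x + 2*PI) = Av k h x) by (intros; apply Av_per; auto).
  assert (pA1 : forall x, Av k h1 (x + 2*PI) = Av k h1 x) by (intros; apply Av_per; auto).
  assert (Pc : forall x, cos (x + 2*PI) = cos x) by apply cos_2pi.
  assert (Ps : forall x, sin (x + 2*PI) = sin x) by apply sin_2pi.
  assert (IA : RInt (Av k h) 0 (2*PI) = RInt h 0 (2*PI) :> R) by (apply int_Av; auto).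
  assert (Acos : forall p, C0 p -> (forall x, p (x + 2*PI) = p x) -> RInt (fun s => Av k p s * cos s) 0 (2*PI) = 0 :> R).
  { intros p Cp Pp. rewrite Av_adj by (auto || c0s). rewrite (RInt_ext _ (fun _ => 0)). apply RInt_0.
    intros. rr. rewrite Am_cos by auto. ring. }
  assert (Asin : forall p, C0 p -> (forall x, p (x + 2*PI) = p x) -> RInt (fun s => Av k p s * sin s) 0 (2*PI) = 0 :> R).
  { intros p Cp Pp. rewrite Av_adj by (auto || c0s). rewrite (RInt_ext _ (fun _ => 0)). apply RInt_0.
    intros. rr. rewrite Am_sin by auto. ring. }
  assert (AA : forall p, C0 p -> (forall x, p (x + 2*PI) = p x) ->
     RInt (fun s => Av k p s * Av k p s) 0 (2*PI) = RInt (fun s => p s * Av k p s) 0 (2*PI) :> R).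
  { intros p Cp Pp. rewrite (Av_adj k p (Av k p)) by (first [assumption | apply C0_Av; assumption | intros; apply Av_per; assumption]).
    apply RInt_ext. intros. rr. rewrite Am_Av; auto. }
  assert (Ih1c : RInt (fun s => h1 s * cos s) 0 (2*PI) = RInt (fun s => h s * sin s) 0 (2*PI) :> R).
  { destruct (coef_der h h1 1 H1 C1 Hp) as [E _]. unfold cA, cB in E. simpl INR in E.
    rewrite Rmult_1_l in E. rewrite (RInt_ext _ (fun x => h1 x * cos (1 * x))).
    rewrite E. apply RInt_ext. intros. rr. rewrite Rmult_1_l; auto.
    intros. rr. rewrite Rmult_1_l; auto. }
  assert (Ih1s : RInt (fun s => h1 s * sin s) 0 (2*PI) = - RInt (fun s => h s * cos s) 0 (2*PI) :> R).
  { destruct (coef_der h h1 1 H1 C1 Hp) as [_ E]. unfold cA, cB in E. simpl INR in E.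
    rewrite (RInt_ext _ (fun x => h1 x * sin (1 * x))).
    rewrite E. rewrite (RInt_ext (fun x => h x * cos (1 * x)) (fun s => h s * cos s)). ring.
    intros. rr. rewrite Rmult_1_l; auto.
    intros. rr. rewrite Rmult_1_l; auto. }
  rewrite (length_eq h h1 h2 H1 H2 C2 Hp Hpos), (area_eq h h1 h2 H1 H2 C2 Hp).
  set (c := / 2 * avg_width h).
  assert (OA : ops_area k h = / 2 * (RInt (fun s => (Av k h s - c) ^ 2) 0 (2*PI) - RInt (fun s => Av k h1 s ^ 2) 0 (2*PI))).
  { unfold ops_area. f_equal. rewrite <- RInt_sub by c0s. apply RInt_ext. intros s _. rr.
    assert (D : Derive (ops_support k h) s = Av k h1 s).
    { apply is_derive_unique. change (ops_support k h) with (fun s => Av k h s - / 2 * avg_width h).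
      auto_derive. exists (Av k h1 s); auto. rewrite (Der_eq (Av k h) (Av k h1) s dA). ring. }
    rewrite D. change (ops_support k h s) with (Av k h s - / 2 * avg_width h). auto. }
  assert (Wk : 4 * RInt (fun s => (Av k h s - c) ^ 2) 0 (2*PI) <= RInt (fun s => Av k h1 s ^ 2) 0 (2*PI)).
  { apply (wirt (fun s => Av k h s - c) (Av k h1) (Av k h2)).
    - intros x. auto_derive. exists (Av k h1 x); auto. rewrite (Der_eq (Av k h) (Av k h1) x dA). ring.
    - auto.
    - auto.
    - intros x. rewrite pA. auto.
    - rr. rewrite RInt_sub by c0s. rewrite IA, RInt_cst. unfold c, avg_width. field. lra.
    - rr. rewrite (RInt_ext _ (fun s => Av k h s * cos s - c * cos s)) by (intros; rr; ring).
      lin. rewrite Acos, ?int_c1, ?int_c1e by auto. ring.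
    - rr. rewrite (RInt_ext _ (fun s => Av k h s * sin s - c * sin s)) by (intros; rr; ring).
      lin. rewrite Asin, ?int_s1, ?int_s1e by auto. ring. }
  assert (K0 : 0 <= RInt (fun s => (Av k h s - c) ^ 2) 0 (2*PI)).
  { apply RInt_ge_0. lra. apply cont_ex; c0s. intros; apply pow2_ge_0. }
  rewrite OA. rewrite Rabs_left1 by lra.
  set (a := a1 h). set (b := b1 h).
  assert (SD : support_dist2 h (ops_plus_disk_support k h) ^ 2 =
     RInt (fun s => (h s - Av k h s - a * cos s - b * sin s) ^ 2) 0 (2*PI)).
  { unfold support_dist2. rewrite pow2_sqrt.
    - apply RInt_ext. intros s _. rr. rewrite pow2_abs. unfold ops_plus_disk_support, steiner_disk_support, a0.
      replace (ops_support k h s) with (Av k h s - c) by reflexivity. fold a b. unfold c. field.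
    - apply RInt_ge_0. lra. 2: intros; apply pow2_ge_0.
      apply (ex_RInt_ext (fun s => (h s - Av k h s - a * cos s - b * sin s) ^ 2)).
      + intros s _. rr. rewrite pow2_abs. unfold ops_plus_disk_support, steiner_disk_support, a0.
        replace (ops_support k h s) with (Av k h s - c) by reflexivity. fold a b. unfold c. field.
      + apply cont_ex; c0s. }
  rewrite SD.
  assert (Wg : 4 * RInt (fun s => (h s - Av k h s - a * cos s - b * sin s) ^ 2) 0 (2*PI)
     <= RInt (fun s => (h1 s - Av k h1 s + a * sin s - b * cos s) ^ 2) 0 (2*PI)).
  { apply (wirt (fun s => h s - Av k h s - a * cos s - b * sin s) (fun s => h1 s - Av k h1 s + a * sin s - b * cos s)
                (fun s => h2 s - Av k h2 s + a * cos s + b * sin s)).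
    - intros x. auto_derive. split; [exists (h1 x); auto | split; [exists (Av k h1 x); auto | auto]].
      rewrite (Der_eq h h1 x H1), (Der_eq (Av k h) (Av k h1) x dA). ring.
    - intros x. auto_derive. split; [exists (h2 x); auto | split; [exists (Av k h2 x); auto | auto]].
      rewrite (Der_eq h1 h2 x H2), (Der_eq (Av k h1) (Av k h2) x dA1). ring.
    - c0s.
    - intros x. rewrite Hp, pA, Pc, Ps. auto.
    - rr. lin. rewrite IA, ?int_c1, ?int_s1, ?int_c1e, ?int_s1e. ring.
    - rr. rewrite (RInt_ext _ (fun s => h s * cos s - Av k h s * cos s - a * (cos s * cos s) - b * (sin s * cos s))) by (intros; rr; ring).
      lin. rewrite Acos, int_cc1, int_sc1 by auto. unfold a, a1. field. lra.
    - rr. rewrite (RInt_ext _ (fun s => h s * sin s - Av k h s * sin s - a * (sin s * cos s) - b * (sin s * sin s))) by (intros; rr; ring).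
      lin. rewrite Asin, int_ss1, int_sc1 by auto. unfold b, b1. field. lra. }
  assert (Eg : RInt (fun s => (h s - Av k h s - a * cos s - b * sin s) ^ 2) 0 (2*PI) =
     RInt (fun s => h s ^ 2) 0 (2*PI) + RInt (fun s => Av k h s * Av k h s) 0 (2*PI) + a ^ 2 * PI + b ^ 2 * PI
     - 2 * RInt (fun s => h s * Av k h s) 0 (2*PI) - 2 * a * RInt (fun s => h s * cos s) 0 (2*PI)
     - 2 * b * RInt (fun s => h s * sin s) 0 (2*PI) :> R).
  { rewrite (RInt_ext _ (fun s => h s ^ 2 + Av k h s * Av k h s + a ^ 2 * (cos s * cos s) + b ^ 2 * (sin s * sin s)
       - 2 * (h s * Av k h s) - (2 * a) * (h s * cos s) - (2 * b) * (h s * sin s)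
       + (2 * a) * (Av k h s * cos s) + (2 * b) * (Av k h s * sin s) + (2 * a * b) * (sin s * cos s))) by (intros; rr; ring).
    lin. rewrite Acos, Asin, int_cc1, int_ss1, int_sc1 by auto. ring. }
  assert (Eg1 : RInt (fun s => (h1 s - Av k h1 s + a * sin s - b * cos s) ^ 2) 0 (2*PI) =
     RInt (fun s => h1 s ^ 2) 0 (2*PI) + RInt (fun s => Av k h1 s * Av k h1 s) 0 (2*PI) + a ^ 2 * PI + b ^ 2 * PI
     - 2 * RInt (fun s => h1 s * Av k h1 s) 0 (2*PI) + 2 * a * RInt (fun s => h1 s * sin s) 0 (2*PI)
     - 2 * b * RInt (fun s => h1 s * cos s) 0 (2*PI) :> R).
  { rewrite (RInt_ext _ (fun s => h1 s ^ 2 + Av k h1 s * Av k h1 s + a ^ 2 * (sin s * sin s) + b ^ 2 * (cos s * cos s)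
       - 2 * (h1 s * Av k h1 s) + (2 * a) * (h1 s * sin s) - (2 * b) * (h1 s * cos s)
       - (2 * a) * (Av k h1 s * sin s) + (2 * b) * (Av k h1 s * cos s) - (2 * a * b) * (sin s * cos s))) by (intros; rr; ring).
    lin. rewrite Acos, Asin, int_cc1, int_ss1, int_sc1 by auto. ring. }
  assert (Ek : RInt (fun s => (Av k h s - c) ^ 2) 0 (2*PI) =
     RInt (fun s => Av k h s * Av k h s) 0 (2*PI) - 2 * c * RInt h 0 (2*PI) + c ^ 2 * (2 * PI) :> R).
  { rewrite (RInt_ext _ (fun s => Av k h s * Av k h s - (2 * c) * Av k h s + c ^ 2)) by (intros; rr; ring).
    lin. rewrite RInt_cst, IA. ring. }
  assert (Ek1 : RInt (fun s => Av k h1 s ^ 2) 0 (2*PI) = RInt (fun s => Av k h1 s * Av k h1 s) 0 (2*PI) :> R).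
  { apply RInt_ext. intros; rr; ring. }
  rewrite Ek1 in *. rewrite Ek in *. rewrite Eg, Eg1 in *.
  rewrite AA in * by auto. rewrite (AA h1) in * by auto.
  rewrite Ih1c, Ih1s in *.
  unfold c, avg_width, a, b, a1, b1 in *.
  set (Ih := RInt h 0 (2*PI)) in *.
  set (Ic := RInt (fun s => h s * cos s) 0 (2*PI)) in *.
  set (Is := RInt (fun s => h s * sin s) 0 (2*PI)) in *.
  set (P := RInt (fun s => h s * Av k h s) 0 (2*PI)) in *.
  set (P1 := RInt (fun s => h1 s * Av k h1 s) 0 (2*PI)) in *.
  set (I2 := RInt (fun s => h s ^ 2) 0 (2*PI)) in *.
  set (I12 := RInt (fun s => h1 s ^ 2) 0 (2*PI)) in *.
  set (G := I2 + P + (/ PI * Ic) ^ 2 * PI + (/ PI * Is) ^ 2 * PI - 2 * P - 2 * (/ PI * Ic) * Ic - 2 * (/ PI * Is) * Is) in *.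
  set (G1 := I12 + P1 + (/ PI * Ic) ^ 2 * PI + (/ PI * Is) ^ 2 * PI - 2 * P1 + 2 * (/ PI * Ic) * - Ic - 2 * (/ PI * Is) * Is) in *.
  match goal with |- ?L >= _ => assert (E : L = 2 * PI * (G1 - G)) end.
  { unfold G, G1. field. lra. }
  rewrite E. nra.
Qed.


Theorem theorem5p7 (k : nat) (h : R -> R) :
  (2 < k)%nat ->
  is_oval_support h ->
  (oval_length h) ^ 2 - 4 * PI * oval_area h - 4 * PI * Rabs (ops_area k h)
    >= 6 * PI * (support_dist2 h (ops_plus_disk_support k h)) ^ 2.
Proof.
  intros Hk [Hp [Hsm Hpos]].
  apply (main_gen k h (Derive h) (Derive (Derive h))); auto.
  - intros x. apply Derive_correct. exact (Hsm 0%nat x).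
  - intros x. apply Derive_correct. exact (Hsm 1%nat x).
  - apply C0_of_der. intros x. exact (Hsm 2%nat x).
Qed.
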